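(* Let $k\ge1$, $n=2k-1$, $T^n=(\mathbb{R}/k\mathbb{Z})^n$, let $X_0=\{\mathbf{x}_\sigma:\mathbf{x}\in[0,1]^2\times[0,2]^2\times\cdots\times[0,k-1]^2\times[0,k],\ \sigma\in S_n\}\subset T^n$ and $X_i=X_0+(i,\dots,i)$ for $i\in\mathbb{Z}_k$. Then $X_0\cup X_1\cup\cdots\cup X_{k-1}=T^n$.
   Context: $\mathbf{x}_\sigma=(x_{\sigma(1)},\dots,x_{\sigma(n)})$ for $\sigma\in S_n$; $[0,j]^2$ denotes two Cartesian factors equal to $[0,j]$, so the product has $n$ factors; products of real intervals are regarded as subsets of $T^n$ via the quotient map $\mathbb{R}^n\to(\mathbb{R}/k\mathbb{Z})^n$; $X_0+(i,\dots,i)=\{\mathbf{x}+(i,\dots,i):\mathbf{x}\in X_0\}$. *)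

(* Defs.v *)
From Stdlib Require Import Reals ZArith.
From mathcomp Require Import all_boot all_fingroup.
Set Implicit Arguments. Unset Strict Implicit. Unset Printing Implicit Defensive.

Local Open Scope R_scope.

Definition dim (k : nat) : nat := (2 * k - 1)%N.

(* a point of R^n, regarded as a point of T^n = (R/kZ)^n *)
Definition pt (k : nat) := 'I_(dim k) -> R.

Definition congr_mod (k : nat) (a b : R) : Prop :=
  exists z : Z, a - b = INR k * IZR z.

(* The box [0,1]^2 x [0,2]^2 x ... x [0,k-1]^2 x [0,k]: the 0-based coordinate j
   ranges in [0, j/2 + 1]. *)
Definition in_box (k : nat) (x : pt k) : Prop :=
  forall j : 'I_(dim k), 0 <= x j <= INR (j./2 + 1).

Definition permute (k : nat) (s : 'S_(dim k)) (x : pt k) : pt k :=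
  fun j => x (s j).

Definition in_X0 (k : nat) (y : pt k) : Prop :=
  exists (x : pt k) (s : 'S_(dim k)),
    in_box x /\ forall j, congr_mod k (y j) (permute s x j).

Definition in_Xi (k : nat) (i : nat) (y : pt k) : Prop :=
  in_X0 (fun j => y j - INR i).

(* Main.v *)
Require Import Defs.
From Stdlib Require Import Reals ZArith Lra Lia.
From mathcomp Require Import all_boot all_fingroup zify.
Set Implicit Arguments. Unset Strict Implicit. Unset Printing Implicit Defensive.
Lemma card_sum_nat (n : nat) (P : pred 'I_n) :
  #|[pred j | P j]| = \sum_(j < n) (P j : nat).
Proof.
rewrite -sum1_card big_mkcond /=; apply: eq_bigr => j _; rewrite inE /=; by case: (P j).
Qed.

Lemma pointwise (k i c b : nat) : b < k -> i < k -> c < k ->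
  (((b + k - i) %% k < c) : nat) + (b < i : nat) =
  if i + c < k then (b < i + c : nat) else 1 + (b < i + c - k : nat).
Proof.
move=> hb hi hc.
have Hv : (b + k - i) %% k = if i <= b then b - i else b + k - i.
  case: (leqP i b) => h.
    have -> : b + k - i = b - i + k by lia.
    by rewrite modnDr modn_small //; lia.
  by rewrite modn_small //; lia.
rewrite Hv; case: (leqP i b) => h; case: (ltnP (i + c) k) => h2;
  repeat (case: ltnP => ?); lia.
Qed.

Lemma cycle_lemma (k n : nat) (beta : 'I_n -> nat) :
  (0 < k) -> n = (2 * k - 1) -> (forall j, beta j < k) ->
  exists i, i < k /\ forall c, c < k ->
    2 * c <= #|[pred j | (beta j + k - i) %% k < c]|.
Proof.
move=> hk hn hb.
pose F m := \sum_(j < n) (beta j < m : nat).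
pose M m := F m + 2 * (k - m).
have F0 : F 0 = 0 by rewrite /F big1 // => j _; rewrite ltn0.
have Fk : F k = n.
  rewrite /F (eq_bigr (fun _ => 1)); last by move=> j _; rewrite hb.
  by rewrite sum1_card card_ord.
pose Q i := (i < k) && [forall r : 'I_k, M i <= M r].
have exQ : exists i, Q i.
  have i0 : 'I_k := Ordinal hk.
  case: (@arg_minnP _ i0 xpredT (fun r : 'I_k => M r) isT) => i _ Hi.
  exists i; rewrite /Q ltn_ord /=; apply/forallP => r; exact: Hi.
case: (ex_minnP exQ) => i /andP [hik /forallP Hmin] Hsmall.
exists i; split => // c hc.
rewrite card_sum_nat.
have Hsum : \sum_(j < n) (((beta j + k - i) %% k < c) : nat) + F i =
   if i + c < k then F (i + c) else n + F (i + c - k).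
  rewrite -big_split /=.
  rewrite (eq_bigr (fun j => if i + c < k then (beta j < i + c : nat)
                      else 1 + (beta j < i + c - k : nat))); last first.
    by move=> j _; apply: pointwise.
  case: ifP => _ //.
  by rewrite big_split /= sum1_card card_ord.
move: Hsum; case: ifP => hic Hsum.
  have := Hmin (Ordinal hic); rewrite /M /=; move=> H; move: H Hsum; clearbody Q M F; set S := \sum_(j < n) _; set A := F i; set B := F (i + c). clearbody S A B; lia.
have hr : i + c - k < i by lia.
have hrk : i + c - k < k by lia.
have nQ : ~~ Q (i + c - k).
  apply/negP => Qr; have := Hsmall _ Qr; lia.
move: nQ; rewrite /Q hrk /= negb_forall => /existsP [r' Hr'].
have := Hmin r'; move: Hr'; rewrite -ltnNge /M /=; move=> H1 H2; move: H1 H2 Hsum.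
clearbody Q M F; set S := \sum_(j < n) _; set A := F i; set B := F (i + c - k).
set C := F r'. clearbody S A B C; lia.
Qed.

Lemma card_lt_strict (n : nat) (A B : pred 'I_n) (x : 'I_n) :
  {subset A <= B} -> x \in B -> x \notin A -> (#|A| < #|B|)%N.
Proof.
move=> sAB xB xA.
rewrite (cardD1 x B) xB add1n ltnS.
apply: subset_leq_card; apply/subsetP => y yA.
rewrite !inE (sAB _ yA) andbT; apply/eqP => e; subst y; by rewrite yA in xA.
Qed.

Local Open Scope R_scope.

Theorem lemmaL (k : nat) (hk : (1 <= k)%N) (y : pt k) :
  exists i : 'I_k, in_Xi i y.
Proof.
set n := dim k.
pose z (j : 'I_n) : Z := (up (y j) - 1)%Z.
have Hz : forall j, IZR (z j) <= y j < IZR (z j) + 1.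
  move=> j; rewrite /z minus_IZR; have [h1 h2] := archimed (y j); lra.
have kpos : (0 < Z.of_nat k)%Z by lia.
pose beta (j : 'I_n) : nat := Z.to_nat (Z.modulo (z j) (Z.of_nat k)).
have Hbeta : forall j, (beta j < k)%N.
  move=> j; rewrite /beta; have := Z.mod_pos_bound (z j) (Z.of_nat k) kpos; lia.
have Hbz : forall j, z j = (Z.of_nat k * (z j / Z.of_nat k) + Z.of_nat (beta j))%Z.
  move=> j; rewrite /beta Z2Nat.id; last by have := Z.mod_pos_bound (z j) (Z.of_nat k) kpos; lia.
  apply: Z_div_mod_eq_full.
have [i [hik Hcyc]] := @cycle_lemma k n beta hk (erefl _) Hbeta.
exists (Ordinal hik); rewrite /in_Xi /in_X0 /=.
pose c (j : 'I_n) := ((beta j + k - i) %% k)%N.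
pose w (j : 'I_n) : R := y j - IZR (z j) + INR (c j).
pose kap (j : 'I_n) := (c j * n + j)%N.
pose rank (j : 'I_n) := #|[pred j' | (kap j' < kap j)%N]|.
have rank_lt : forall j, (rank j < n)%N.
  move=> j; rewrite -[X in (_ < X)%N]card_ord; apply: (@card_lt_strict _ _ predT j) => //.
  by rewrite inE ltnn.
pose f (j : 'I_n) : 'I_n := Ordinal (rank_lt j).
have kap_inj : injective kap.
  move=> a b; rewrite /kap => e; apply: val_inj => /=.
  have ha := ltn_ord a; have hb := ltn_ord b.
  have := congr1 (modn^~ n) e; rewrite !modnMDl !modn_small //.
have rank_mono : forall a b, (kap a < kap b)%N -> (rank a < rank b)%N.
  move=> a b hab; apply: (card_lt_strict (x := a)).
  - move=> v; rewrite !inE => h; exact: ltn_trans h hab.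
  - by rewrite inE.
  - by rewrite inE ltnn.
have f_inj : injective f.
  move=> a b /(congr1 val) /= e; apply: kap_inj.
  case: (ltngtP (kap a) (kap b)) => // h.
  - by have := rank_mono _ _ h; rewrite e ltnn.
  - by have := rank_mono _ _ h; rewrite e ltnn.
pose s := perm f_inj.
exists (fun p => w ((s^-1)%g p)), s; split.
- move=> p; set j := (s^-1)%g p.
  have hp : p = s j by rewrite /j permKV.
  have Hc : (2 * c j <= rank j)%N.
    case: (posnP (c j)) => [->|cpos] //.
    have hck : (c j < k)%N by rewrite /c ltn_mod; lia.
    apply: leq_trans (Hcyc _ hck) _.
    apply: subset_leq_card; apply/subsetP => v; rewrite !inE => hv.
    rewrite /kap; have := ltn_ord v; have := ltn_ord j; rewrite -/(c v) in hv; nia.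
  have Hp : (c j + 1 <= p./2 + 1)%N.
    rewrite hp /s permE /= leq_add2r geq_half_double -mul2n; exact: Hc.
  have := Hz j; move/le_INR: (leP Hp); rewrite plus_INR /w; simpl INR.
  have := pos_INR (c j); lra.
- move=> j; rewrite /permute permK.
  pose d := ((beta j + k - i) %/ k)%N.
  have Hd : (beta j + k - i = d * k + c j)%N by rewrite /d /c -divn_eq.
  exists (z j / Z.of_nat k + Z.of_nat d - 1)%Z.
  have Zeq : (z j = Z.of_nat i + Z.of_nat (c j) + Z.of_nat k * (z j / Z.of_nat k + Z.of_nat d - 1))%Z.
    rewrite {1}(Hbz j); move: Hd; have := Hbeta j; nia.
  have E : IZR (z j) = IZR (Z.of_nat i) + IZR (Z.of_nat (c j)) + IZR (Z.of_nat k) * IZR (z j / Z.of_nat k + Z.of_nat d - 1).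
    by rewrite -mult_IZR -!plus_IZR -Zeq.
  rewrite /w !INR_IZR_INZ; lra.
Qed.
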